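(* Let $\mathcal{G}$ be a 2-player finite game, let $y(t)$ solve $\dot y_k=v_k(Q(y))$, $k=1,2$, and let $x(t)=Q(y(t))$. If the score differences $y_{k\alpha}(t)-y_{k\beta}(t)$ remain bounded for all $t\ge0$, all $\alpha,\beta\in\mathcal{A}_k$ and $k=1,2$, then the time average $\bar x(t)=t^{-1}\int_0^tx(s)\,ds$ converges to the set of Nash equilibria of $\mathcal{G}$.
   Context: Setting: finite game with players $\mathcal{N}=\{1,2\}$, action sets $\mathcal{A}_k$, mixed strategies $\mathcal{X}_k=\Delta(\mathcal{A}_k)$, bilinear expected payoffs $u_k$, payoff vectors $v_k(x)=(u_k(\alpha;x_{-k}))_{\alpha\in\mathcal{A}_k}$. Each player has a penalty function $h_k$ on $\mathcal{X}_k$ (continuous, $C^\infty$ on relative interiors of faces, strongly convex: $h(tx_1+(1-t)x_2)\le th(x_1)+(1-t)h(x_2)-\tfrac12Kt(1-t)\|x_1-x_2\|^2$, $K>0$), with choice map $Q_k(y_k)=\arg\max_{x_k\in\mathcal{X}_k}\{\langle y_k,x_k\rangle-h_k(x_k)\}$; $Q=(Q_1,Q_2)$. Nash equilibrium: $u_k(x^* )\ge u_k(x_k;x^*_{-k})$ for all $x_k$, $k$. *)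

(* Defs.v *)
From HB Require Import structures.
From mathcomp Require Import all_boot all_order all_algebra.
From mathcomp Require Import all_classical all_reals all_analysis.
Set Implicit Arguments. Unset Strict Implicit. Unset Printing Implicit Defensive.
Import Order.TTheory GRing.Theory Num.Theory.
Import numFieldNormedType.Exports.
Local Open Scope classical_set_scope.
Local Open Scope ring_scope.

Section Game.
Variable R : realType.

Definition simplex (A : finType) (x : A -> R) : Prop :=
  (forall a, 0 <= x a) /\ \sum_a x a = 1.

Definition dotp (A : finType) (y x : A -> R) : R := \sum_a y a * x a.

Definition sqdist (A : finType) (x1 x2 : A -> R) : R := \sum_a (x1 a - x2 a) ^+ 2.

Definition continuous_on_simplex (A : finType) (h : (A -> R) -> R) : Prop :=
  forall x, simplex x -> forall e : R, 0 < e -> exists2 d : R, 0 < d &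
    forall z, simplex z -> (forall a, `|z a - x a| < d) -> `|h z - h x| < e.

Definition relint_face (A : finType) (S : {set A}) (x : A -> R) : Prop :=
  (forall a, a \in S -> 0 < x a) /\ (forall a, a \notin S -> x a = 0)
  /\ \sum_a x a = 1.

Definition tangent_face (A : finType) (S : {set A}) (d : A -> R) : Prop :=
  (forall a, a \notin S -> d a = 0) /\ \sum_a d a = 0.

Fixpoint iter_dd (A : finType) (f : (A -> R) -> R) (ds : seq (A -> R))
  : (A -> R) -> R :=
  match ds with
  | [::] => f
  | d :: ds' => fun x => derive1 (fun t : R => iter_dd f ds' (fun a => x a + t * d a)) 0
  end.

(* f is C^infty on the (relatively open) set U of the affine space with
   direction space T: all iterated directional derivatives along T exist
   and are continuous on U *)
Definition smooth_on (A : finType) (U T : (A -> R) -> Prop) (f : (A -> R) -> R)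
  : Prop :=
  forall ds : seq (A -> R), (forall d, d \in ds -> T d) ->
    (forall d x, T d -> U x ->
       derivable (fun t : R => iter_dd f ds (fun a => x a + t * d a)) 0 1)
    /\ (forall x, U x -> forall e : R, 0 < e -> exists2 del : R, 0 < del &
          forall z, U z -> (forall a, `|z a - x a| < del) ->
            `|iter_dd f ds z - iter_dd f ds x| < e).

Definition smooth_on_faces (A : finType) (h : (A -> R) -> R) : Prop :=
  forall S : {set A}, S != finset.set0 -> smooth_on (relint_face S) (tangent_face S) h.

Definition strongly_convex (A : finType) (h : (A -> R) -> R) : Prop :=
  exists2 K : R, 0 < K &
    forall x1 x2 (t : R), simplex x1 -> simplex x2 -> 0 <= t -> t <= 1 ->
      h (fun a => t * x1 a + (1 - t) * x2 a)
      <= t * h x1 + (1 - t) * h x2 - 2^-1 * K * t * (1 - t) * sqdist x1 x2.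

Definition penalty (A : finType) (h : (A -> R) -> R) : Prop :=
  [/\ continuous_on_simplex h, smooth_on_faces h & strongly_convex h].

Definition choice_map (A : finType) (h : (A -> R) -> R) (Q : (A -> R) -> A -> R)
  : Prop :=
  forall y, simplex (Q y) /\
    forall x, simplex x -> dotp y x - h x <= dotp y (Q y) - h (Q y).

Definition payoff (A1 A2 : finType) (U : A1 -> A2 -> R) (x1 : A1 -> R) (x2 : A2 -> R)
  : R := \sum_a1 \sum_a2 x1 a1 * x2 a2 * U a1 a2.

Definition payvec1 (A1 A2 : finType) (U1 : A1 -> A2 -> R) (x2 : A2 -> R) : A1 -> R :=
  fun a1 => \sum_a2 x2 a2 * U1 a1 a2.
Definition payvec2 (A1 A2 : finType) (U2 : A1 -> A2 -> R) (x1 : A1 -> R) : A2 -> R :=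
  fun a2 => \sum_a1 x1 a1 * U2 a1 a2.

Definition nash (A1 A2 : finType) (U1 U2 : A1 -> A2 -> R)
  (x1 : A1 -> R) (x2 : A2 -> R) : Prop :=
  [/\ simplex x1, simplex x2,
      (forall z1, simplex z1 -> payoff U1 z1 x2 <= payoff U1 x1 x2) &
      (forall z2, simplex z2 -> payoff U2 x1 z2 <= payoff U2 x1 x2)].

Definition time_avg (A : finType) (x : R -> A -> R) (t : R) : A -> R :=
  fun a => t^-1 * Rintegral lebesgue_measure `[0, t] (fun s => x s a).

End Game.

(* Main.v *)
Require Import Defs.
From HB Require Import structures.
From mathcomp Require Import all_boot all_order all_algebra.
From mathcomp Require Import all_classical all_reals all_analysis.
Import Order.TTheory GRing.Theory Num.Theory.
Import numFieldNormedType.Exports.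
Local Open Scope classical_set_scope.
Local Open Scope ring_scope.

From mathcomp Require Import ring lra.
Section Helpers.
Variable R : realType.
Notation PT B := (prod_topology (fun _ : B => R)).
Notation mu := (@lebesgue_measure R).


Lemma box_compact (B : finType) :
  @compact (PT B) [set f | forall b, `[(0:R), 1]%classic (f b)].
Proof.
apply: (@tychonoff B (fun _ => R) (fun _ => `[(0:R), 1]%classic)) => _.
exact: segment_compact.
Qed.

Lemma nbhs_supball (B : finType) (p : PT B) (r : R) :
  0 < r -> nbhs p [set z : PT B | forall b, `|z b - p b| < r].
Proof.
move=> r0.
have H : forall b, nbhs p [set z : PT B | `|z b - p b| < r].
  move=> b; have := @proj_continuous B (fun _ => R) b p.
  move=> /(_ (ball (p b) r)) /=.
  move=> /(_ (nbhsx_ballx _ _ r0)) Hb.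
  have Hb' : nbhs p (@proj B (fun _ => R) b @^-1` ball (p b) r) := Hb.
  apply: (@filterS _ _ (@nbhs_filter (PT B) p) _ _ _ Hb') => z /=.
  by rewrite -ball_normE /= distrC.
have := @filter_forall _ B (fun b => [set z : PT B | `|z b - p b| < r]) (nbhs p) (@nbhs_filter (PT B) p) H.
by apply: (@filterS _ _ (@nbhs_filter (PT B) p)).
Qed.

Lemma lin_small (B : finType) (c : B -> R) (e : R) : 0 < e ->
  exists2 r, 0 < r & forall (d : B -> R), (forall b, `|d b| < r) ->
    \sum_b `|c b| * `|d b| < e.
Proof.
move=> e0; set C := \sum_b `|c b|.
have C0 : 0 <= C by apply: sumr_ge0 => b _.
exists (e / (C + 1)); first by apply: divr_gt0 => //; lra.
move=> d Hd.
apply: (@le_lt_trans _ _ (\sum_b `|c b| * (e / (C + 1)))).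
  by apply: ler_sum => b _; apply: ler_wpM2l => //; apply: ltW.
rewrite -mulr_suml -/C.
rewrite mulrA ltr_pdivrMr; last lra.
nra.
Qed.

Lemma cluster_le (B : finType) (F : set_system (PT B)) (p : PT B) :
  cluster F p -> forall (phi : (B -> R) -> R) (c : B -> R),
  (forall z : B -> R, `|phi z - phi p| <= \sum_b `|c b| * `|z b - p b|) ->
  (forall d, 0 < d -> F [set z | phi z <= d]) -> phi p <= 0.
Proof.
move=> cl phi c Hphi HF.
rewrite leNgt; apply/negP => phip.
have [r r0 Hr] := @lin_small B c _ (divr_gt0 phip (ltr0Sn _ 1)).
have := cl _ _ (HF _ (divr_gt0 phip (ltr0Sn _ 1))) (@nbhs_supball B p r r0).
case=> z [/= zle zb].
have := Hr (fun b => z b - p b) zb.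
have := Hphi z.
move: zle; set u := phi z; set v := phi p.
rewrite ler_norml => zle /andP[h1 h2] h3.
lra.
Qed.

Lemma pv_diff (A B : finType) (U : A -> B -> R) (z p : B -> R) a :
  `|payvec1 U z a - payvec1 U p a| <= \sum_b `|U a b| * `|z b - p b|.
Proof.
rewrite /payvec1 -sumrB; apply: le_trans; first exact: ler_norm_sum.
by apply: ler_sum => b _; rewrite -mulrBl normrM mulrC.
Qed.

Lemma approx_indiff (A B : finType) (U : A -> B -> R) (e : R) : 0 < e ->
  exists2 d, 0 < d & forall z, simplex z ->
    (forall a a', `|payvec1 U z a - payvec1 U z a'| < d) ->
    exists z', [/\ simplex z', (forall a a', payvec1 U z' a = payvec1 U z' a')
                 & forall b, `|z b - z' b| < e].
Proof.
move=> e0; apply: contrapT => H.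
have Hn : forall n : nat, exists z : B -> R, [/\ simplex z,
    (forall a a', `|payvec1 U z a - payvec1 U z a'| < n.+1%:R^-1) &
    ~ exists z', [/\ simplex z', (forall a a', payvec1 U z' a = payvec1 U z' a')
                 & forall b, `|z b - z' b| < e]].
  move=> n; apply: contrapT => Hn; apply: H; exists n.+1%:R^-1 => // z zs zg.
  by apply: contrapT => nz; apply: Hn; exists z; split.
have [zs Hzs] := choice Hn.
pose F := (fun n => (zs n : PT B)) @ \oo.
have FF : ProperFilter F by apply: fmap_proper_filter.
have Fbox : F [set f | forall b, `[(0:R), 1]%classic (f b)].
  exists 0%N => // n _ b /=.
  have [[z0 z1] _ _] := Hzs n.
  rewrite in_itv /= z0 /=.
  rewrite -z1 (bigD1 b) //= lerDl; exact: sumr_ge0.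
have [p [boxp clp]] := @box_compact B F FF Fbox.
have sp : simplex p.
  split.
    by move=> b; have := boxp b; rewrite /= in_itv /= => /andP[].
  have := @cluster_le B F p clp (fun z => `|\sum_b z b - 1|) (fun=> 1).
  move=> H1.
  suff : `|\sum_b p b - 1| <= 0 by rewrite normr_le0 subr_eq0 => /eqP.
  apply: H1.
    move=> z; apply: le_trans; first exact: ler_dist_dist.
    rewrite opprB addrA subrK -sumrB; apply: le_trans; first exact: ler_norm_sum.
    by apply: ler_sum => b _; rewrite normr1 mul1r.
  move=> d d0; exists 0%N => // n _ /=.
  have [[_ ->] _ _] := Hzs n; by rewrite subrr normr0 ltW.
have ip : forall a a', payvec1 U p a = payvec1 U p a'.
  move=> a a'; apply/eqP; rewrite -subr_eq0 -normr_eq0 eq_le normr_ge0 andbT.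
  apply: (@cluster_le B F p clp (fun z => `|payvec1 U z a - payvec1 U z a'|)
      (fun b => `|U a b| + `|U a' b|)).
    move=> z; apply: le_trans; first exact: ler_dist_dist.
    rewrite opprB addrA.
    have -> : payvec1 U z a - payvec1 U z a' + payvec1 U p a' - payvec1 U p a =
      (payvec1 U z a - payvec1 U p a) - (payvec1 U z a' - payvec1 U p a') by ring.
    apply: le_trans; first exact: ler_normB.
    apply: le_trans; first exact: (lerD (@pv_diff A B U z p a) (@pv_diff A B U z p a')).
    rewrite -big_split /=; apply: ler_sum => b _.
    by rewrite [X in _ <= X * _]ger0_norm ?addr_ge0 // mulrDl.
  move=> d d0.
  have [N _ HN] := near_infty_natSinv_lt (PosNum d0).
  exists N => // n /= Nn.
  have [_ Hg _] := Hzs n.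
  by apply/ltW/(lt_le_trans (Hg a a')); apply/ltW/HN.
have Frange : F (range zs : set (PT B)).
  by exists 0%N => // n _; exists n.
have [z [[n _ <-] zb]] := clp _ _ Frange (@nbhs_supball B p e e0).
have [_ _ []] := Hzs n.
by exists p; split.
Qed.


Lemma simplex_le1 (A : finType) (x : A -> R) a : simplex x -> 0 <= x a <= 1.
Proof.
case=> x0 x1; rewrite x0 /= -x1 (bigD1 a) //= lerDl; exact: sumr_ge0.
Qed.

Lemma Q_gap (A : finType) (h : (A -> R) -> R) Q :
  strongly_convex h -> choice_map h Q ->
  exists2 K : R, 0 < K & forall y z, simplex z ->
    K / 4 * sqdist (Q y) z <= (dotp y (Q y) - h (Q y)) - (dotp y z - h z).
Proof.
case=> K K0 Hsc HQ; exists K => // y z sz.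
have [sQ maxQ] := HQ y.
pose m := fun a => 2^-1 * Q y a + (1 - 2^-1) * z a.
have sm : simplex m.
  case: sQ => q0 q1; case: sz => z0 z1; split.
    by move=> a; rewrite /m addr_ge0 // mulr_ge0 //; lra.
  rewrite /m big_split /= -!mulr_sumr q1 z1; lra.
have hm := Hsc (Q y) z 2^-1 sQ sz ltac:(lra) ltac:(lra).
have dm : dotp y m = 2^-1 * dotp y (Q y) + (1 - 2^-1) * dotp y z.
  rewrite /dotp /m !mulr_sumr -big_split /=; apply: eq_bigr => a _; ring.
have := maxQ m sm.
rewrite -/m in hm.
move: hm; rewrite dm.
set S := sqdist _ _; set hM := h m; set hQ := h (Q y); set hz := h z.
set dQ := dotp y (Q y); set dz := dotp y z.
have -> : 2^-1 * K * 2^-1 * (1 - 2^-1) * S = K * S / 8 by field.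
rewrite (_ : K / 4 * S = K * S / 4); last by ring.
set KS := K * S.
lra.
Qed.

Lemma sqdistC (A : finType) (x z : A -> R) : sqdist x z = sqdist z x.
Proof. by apply: eq_bigr => a _; rewrite -sqrrN opprB. Qed.

Lemma Q_holder (A : finType) (h : (A -> R) -> R) Q :
  strongly_convex h -> choice_map h Q ->
  exists2 C : R, 0 < C & forall y y' a,
    (Q y a - Q y' a) ^+ 2 <= C * \sum_b `|y b - y' b|.
Proof.
move=> sc HQ; have [K K0 HK] := @Q_gap A h Q sc HQ.
exists (4 / K); first by apply: divr_gt0.
move=> y y' a.
have s1 := (HQ y).1; have s2 := (HQ y').1.
have g1 := HK y (Q y') s2; have g2 := HK y' (Q y) s1.
rewrite (@sqdistC A) in g2.
have Hsa : (Q y a - Q y' a) ^+ 2 <= sqdist (Q y) (Q y').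
  rewrite /sqdist (bigD1 a) //= lerDl; apply: sumr_ge0 => b _; exact: sqr_ge0.
have Hd : dotp y (Q y) - dotp y (Q y') + (dotp y' (Q y') - dotp y' (Q y))
          <= \sum_b `|y b - y' b|.
  have -> : dotp y (Q y) - dotp y (Q y') + (dotp y' (Q y') - dotp y' (Q y))
      = \sum_b (y b - y' b) * (Q y b - Q y' b).
    rewrite /dotp -!sumrB -big_split /=; apply: eq_bigr => b _; ring.
  apply: ler_sum => b _.
  apply: le_trans (ler_norm _) _; rewrite normrM.
  rewrite -[X in _ <= X]mulr1; apply: ler_wpM2l => //.
  have := @simplex_le1 A _ b s1; have := @simplex_le1 A _ b s2.
  move=> /andP[u0 u1] /andP[v0 v1]; rewrite ler_norml; apply/andP; split; lra.
set S := sqdist _ _ in g1 g2 Hsa.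
set D := \sum_b _ in Hd *.
have hS : K / 4 * S + K / 4 * S <= D.
  apply: le_trans (lerD g1 g2) _.
  by apply: le_trans Hd; rewrite le_eqVlt; apply/orP; left; apply/eqP; ring.
rewrite -(@ler_pM2l _ (K / 4)); last by apply: divr_gt0.
apply: le_trans (ler_wpM2l _ Hsa) _; first by apply/ltW/divr_gt0.
rewrite mulrA (_ : K / 4 * (4 / K) = 1); last by field; apply/lt0r_neq0.
rewrite mul1r.
have S0 : 0 <= S by apply: sumr_ge0 => b _; exact: sqr_ge0.
have KS0 : 0 <= K / 4 * S by apply: mulr_ge0 => //; apply/ltW/divr_gt0.
lra.
Qed.

Lemma cvg_sum_fin (T : Type) (F : set_system T) (FF : Filter F) (I : finType)
  (f : T -> I -> R) (l : I -> R) :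
  (forall i, f s i @[s --> F] --> l i) ->
  (\sum_i f s i) @[s --> F] --> \sum_i l i.
Proof.
move=> Hf.
suff H : forall r : seq I, (\sum_(i <- r) f s i) @[s --> F] --> \sum_(i <- r) l i.
  exact: H.
elim=> [|i r IH].
  under eq_fun do rewrite big_nil.
  by rewrite big_nil; exact: cvg_cst.
under eq_fun do rewrite big_cons.
by rewrite big_cons; apply: cvgD.
Qed.

Lemma Q_transfer (A : finType) (h : (A -> R) -> R) Q :
  strongly_convex h -> choice_map h Q ->
  forall (T : Type) (F : set_system T) (FF : Filter F) (u : T -> A -> R) (y0 : A -> R),
  (forall b, u s b @[s --> F] --> y0 b) ->
  forall a, Q (u s) a @[s --> F] --> Q y0 a.
Proof.
move=> sc HQ T F FF u y0 Hu a.
have [C C0 HC] := @Q_holder A h Q sc HQ.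
have Hs : (\sum_b `|y0 b - u s b|) @[s --> F] --> \sum_(b : A) (0:R).
  apply: cvg_sum_fin => b.
  rewrite -(normr0 R) -(subrr (y0 b)).
  apply: cvg_norm; apply: cvgB => //; exact: cvg_cst.
rewrite big1 // in Hs.
apply/cvgrPdist_lt => e e0.
move/cvgrPdist_lt: Hs => /(_ (e ^+ 2 / C)) Hs.
have : 0 < e ^+ 2 / C by apply: divr_gt0 => //; exact: exprn_gt0.
move/Hs; apply: filterS => s.
rewrite sub0r normrN => Hlt.
have := HC y0 (u s) a.
have S0 : 0 <= \sum_b `|y0 b - u s b| by apply: sumr_ge0.
rewrite ger0_norm // in Hlt.
move=> H2.
have H3 : (Q y0 a - Q (u s) a) ^+ 2 < e ^+ 2.
  apply: le_lt_trans H2 _.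
  by rewrite -ltr_pdivlMl // mulrC.
move: H3; set d := _ - _ => H3.
rewrite ltr_norml; apply/andP; split; nra.
Qed.


Definition cont0 (g : R -> R) : Prop :=
  (forall t : R, 0 < t -> g s @[s --> t] --> g t) /\ g s @[s --> 0^'+] --> g 0.

Lemma cont0_within (g : R -> R) (t : R) : cont0 g -> 0 < t -> {within `[0, t], continuous g}.
Proof.
case=> gc g0 t0; apply/continuous_within_itvP => //; split => //.
  move=> s; rewrite in_itv /= => /andP[s0 _]; exact: gc.
exact/cvg_at_left_filter/gc.
Qed.

Lemma cont0_integrable (g : R -> R) (t : R) : cont0 g -> 0 < t ->
  mu.-integrable `[0, t] (EFin \o g).
Proof.
move=> cg t0; apply: continuous_compact_integrable; first exact: segment_compact.
exact: cont0_within.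
Qed.

Lemma Rintegral_sum_seq (D : set R) (I : Type) (r : seq I) (f : I -> R -> R) :
  measurable D -> (forall i, mu.-integrable D (EFin \o f i)) ->
  \int[mu]_(x in D) (\sum_(i <- r) f i x) = \sum_(i <- r) \int[mu]_(x in D) f i x
  /\ mu.-integrable D (EFin \o (fun x => \sum_(i <- r) f i x)).
Proof.
move=> mD Hf; elim: r => [|i r [IH1 IH2]].
  under eq_Rintegral do rewrite big_nil.
  rewrite big_nil Rintegral_cst // mul0r; split => //.
  have -> : (EFin \o (fun x => \sum_(i <- [::]) f i x)) = cst 0%E.
    by apply/funext => x /=; rewrite big_nil.
  exact: integrable0.
under eq_Rintegral do rewrite big_cons.
rewrite big_cons RintegralD // IH1; split => //.
have -> : (EFin \o (fun x => \sum_(j <- i :: r) f j x)) =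
   (EFin \o f i) \+ (EFin \o (fun x => \sum_(j <- r) f j x)).
  by apply/funext => x /=; rewrite big_cons EFinD.
exact: integrableD.
Qed.


Lemma cont0_lin (B : finType) (x : R -> B -> R) (c : B -> R) :
  (forall b, cont0 (fun s => x s b)) -> cont0 (fun s => \sum_b x s b * c b).
Proof.
move=> Hx; split.
  move=> t t0; apply: cvg_sum_fin => b; apply: cvgMr_tmp; exact: (Hx b).1.
apply: cvg_sum_fin => b; apply: cvgMr_tmp; exact: (Hx b).2.
Qed.

Lemma cont0_deriv (g : R -> R) : (forall t : R, 0 < t -> derivable g t 1) ->
  g s @[s --> 0^'+] --> g 0 -> cont0 g.
Proof.
move=> Hd H0; split => // t t0.
apply: differentiable_continuous; apply/derivable1_diffP; exact: Hd.
Qed.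

Lemma avg_payvec (A B : finType) (U : A -> B -> R) (y : R -> A -> R) (x : R -> B -> R) :
  (forall t : R, 0 < t -> forall a, is_derive t 1 (fun s => y s a) (payvec1 U (x t) a)) ->
  (forall a, (fun s : R => y s a) s @[s --> 0^'+] --> y 0 a) ->
  (forall b, cont0 (fun s => x s b)) ->
  forall t : R, 0 < t -> forall a, payvec1 U (time_avg x t) a = t^-1 * (y t a - y 0 a).
Proof.
move=> Hd H0 Hx t t0 a.
have cy : cont0 (fun s => y s a).
  apply: cont0_deriv (H0 a) => s s0; have := Hd s s0 a => ?; exact: ex_derive.
have Hf : {within `[0, t], continuous (fun s => payvec1 U (x s) a)}.
  by apply: cont0_within => //; exact: (@cont0_lin B x (U a) Hx).
have Hder : derivable_oo_LRcontinuous (fun s => y s a) 0 t.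
  split.
  + move=> s; rewrite in_itv /= => /andP[s0 _]; have := Hd s s0 a => ?; exact: ex_derive.
  + exact: H0.
  + exact/cvg_at_left_filter/(cy.1 t t0).
have Hd' : {in `]0, t[, derive1 (fun s => y s a) =1 (fun s => payvec1 U (x s) a)}.
  move=> s; rewrite in_itv /= => /andP[s0 _]; rewrite derive1E.
  have := Hd s s0 a => ?; exact: derive_val.
have HI := @continuous_FTC2 R (fun s => payvec1 U (x s) a) (fun s => y s a) 0 t t0 Hf Hder Hd'.
have HR : \int[mu]_(s in `[0, t]) payvec1 U (x s) a = y t a - y 0 a.
  by rewrite /Rintegral HI -EFinB.
rewrite -HR /time_avg /payvec1.
have mI : measurable (`[0, t]%classic : set R) by exact: measurable_itv.
have Hi : forall b, mu.-integrable `[0, t] (EFin \o (fun s => x s b * U a b)).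
  move=> b; apply: cont0_integrable => //.
  split.
    by move=> s s0; apply: cvgMr_tmp; exact: (Hx b).1.
  by apply: cvgMr_tmp; exact: (Hx b).2.
rewrite (@Rintegral_sum_seq _ _ _ _ mI Hi).1 mulr_sumr.
apply: eq_bigr => b _.
rewrite RintegralZr //; first by rewrite mulrA.
exact: cont0_integrable (Hx b) t0.
Qed.

Lemma avg_simplex (B : finType) (x : R -> B -> R) :
  (forall s, simplex (x s)) -> (forall b, cont0 (fun s => x s b)) ->
  forall t : R, 0 < t -> simplex (time_avg x t).
Proof.
move=> Hs Hx t t0.
have mI : measurable (`[0, t]%classic : set R) by exact: measurable_itv.
split.
  move=> b; rewrite /time_avg mulr_ge0 //; first by rewrite invr_ge0 ltW.
  by apply: Rintegral_ge0 => s _; exact: (Hs s).1.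
rewrite /time_avg -mulr_sumr.
have Hi : forall b, mu.-integrable `[0, t] (EFin \o (fun s => x s b)).
  move=> b; exact: cont0_integrable (Hx b) t0.
rewrite -(@Rintegral_sum_seq _ _ _ _ mI Hi).1.
under eq_Rintegral do rewrite (Hs _).2.
have Hm : mu `[0, t]%classic = t%:E by rewrite lebesgue_measure_itv /= lte_fin t0 /= sube0.
rewrite Rintegral_cst //.
have Hm' : forall z : \bar R, z = t%:E -> t^-1 * (1 * fine z) = 1.
  by move=> z ->; rewrite /= mul1r mulVf // gt_eqF.
apply: Hm'; exact: Hm.
Qed.


Lemma cont0_Q (A : finType) (h : (A -> R) -> R) Q :
  strongly_convex h -> choice_map h Q -> forall (y : R -> A -> R),
  (forall b, cont0 (fun s => y s b)) -> forall a, cont0 (fun s => Q (y s) a).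
Proof.
move=> sc HQ y Hy a; split.
  move=> t t0.
  exact: (@Q_transfer A h Q sc HQ R (nbhs t) _ y (y t) (fun b => (Hy b).1 t t0) a).
exact: (@Q_transfer A h Q sc HQ R (0^'+) _ y (y 0) (fun b => (Hy b).2) a).
Qed.

Lemma gap_small (t M d D : R) : 0 < t -> 0 < d -> (2 * `|M| + 1) / d < t ->
  `|D| <= `|M| + `|M| -> `|t^-1 * D| < d.
Proof.
move=> t0 d0 Ht HD.
rewrite ltr_pdivrMr // in Ht.
rewrite normrM normfV (gtr0_norm t0).
rewrite -(ltr_pM2l t0) mulrA mulfV ?gt_eqF // mul1r.
have := normr_ge0 M; lra.
Qed.

Lemma indiff_sum (I : finType) (v w z : I -> R) : (forall i j, v i = v j) ->
  simplex w -> simplex z -> \sum_i w i * v i = \sum_i z i * v i.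
Proof.
move=> Hv sw sz.
have key : forall u, simplex u -> \sum_i u i * v i = \sum_j z j * v j.
  move=> u [_ su].
  transitivity (\sum_i u i * \sum_j z j * v j).
    apply: eq_bigr => i _; congr (_ * _).
    have -> : v i = \sum_j z j * v i by rewrite -mulr_suml sz.2 mul1r.
    by apply: eq_bigr => j _; rewrite (Hv i j).
  by rewrite -mulr_suml su mul1r.
by rewrite (key w sw).
Qed.

Lemma payoff1E (A1 A2 : finType) (U : A1 -> A2 -> R) w z2 :
  payoff U w z2 = \sum_a w a * payvec1 U z2 a.
Proof.
rewrite /payoff /payvec1; apply: eq_bigr => a _; rewrite mulr_sumr.
by apply: eq_bigr => b _; rewrite mulrA.
Qed.

Lemma payoff2E (A1 A2 : finType) (U : A1 -> A2 -> R) z1 w :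
  payoff U z1 w = \sum_b w b * payvec2 U z1 b.
Proof.
rewrite /payoff /payvec2 exchange_big /=; apply: eq_bigr => b _; rewrite mulr_sumr.
by apply: eq_bigr => a _; rewrite mulrA [w b * _]mulrC.
Qed.
End Helpers.
Arguments cont0 {R}.
Arguments cont0_deriv {R}.
Arguments indiff_sum {R I v w z}.
Arguments payoff1E {R A1 A2}.
Arguments payoff2E {R A1 A2}.

Theorem theorem6p1 (R : realType) (A1 A2 : finType) (U1 U2 : A1 -> A2 -> R)
  (h1 : (A1 -> R) -> R) (h2 : (A2 -> R) -> R)
  (Q1 : (A1 -> R) -> A1 -> R) (Q2 : (A2 -> R) -> A2 -> R)
  (y1 : R -> A1 -> R) (y2 : R -> A2 -> R) :
  penalty h1 -> penalty h2 ->
  choice_map h1 Q1 -> choice_map h2 Q2 ->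
  (* y solves  dy_k/dt = v_k(Q(y))  on [0, +oo) *)
  (forall t : R, 0 < t -> forall a,
     is_derive t 1 (fun s => y1 s a) (payvec1 U1 (Q2 (y2 t)) a)) ->
  (forall t : R, 0 < t -> forall b,
     is_derive t 1 (fun s => y2 s b) (payvec2 U2 (Q1 (y1 t)) b)) ->
  (forall a, (fun s : R => y1 s a) x @[x --> 0^'+] --> y1 0 a) ->
  (forall b, (fun s : R => y2 s b) x @[x --> 0^'+] --> y2 0 b) ->
  (* bounded score differences *)
  (exists M : R, forall t : R, 0 <= t -> forall a a', `|y1 t a - y1 t a'| <= M) ->
  (exists M : R, forall t : R, 0 <= t -> forall b b', `|y2 t b - y2 t b'| <= M) ->
  (* the time average of x(t) = Q(y(t)) converges to the Nash set *)
  forall e : R, 0 < e -> exists T : R, forall t : R, T < t ->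
    exists z1 z2, nash U1 U2 z1 z2 /\
      (forall a, `|time_avg (fun s => Q1 (y1 s)) t a - z1 a| < e) /\
      (forall b, `|time_avg (fun s => Q2 (y2 s)) t b - z2 b| < e).
Proof.
case=> _ _ sc1; case=> _ _ sc2 HQ1 HQ2 Hd1 Hd2 H01 H02 [M1 HM1] [M2 HM2] e e0.
pose x1 := fun s => Q1 (y1 s); pose x2 := fun s => Q2 (y2 s).
have cy1 : forall a, cont0 (fun s => y1 s a).
  move=> a; apply: cont0_deriv (H01 a) => s s0; have := Hd1 s s0 a => ?; exact: ex_derive.
have cy2 : forall b, cont0 (fun s => y2 s b).
  move=> b; apply: cont0_deriv (H02 b) => s s0; have := Hd2 s s0 b => ?; exact: ex_derive.
have cx1 : forall a, cont0 (fun s => x1 s a) := @cont0_Q R A1 h1 Q1 sc1 HQ1 y1 cy1.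
have cx2 : forall b, cont0 (fun s => x2 s b) := @cont0_Q R A2 h2 Q2 sc2 HQ2 y2 cy2.
have P2 := @avg_payvec R A1 A2 U1 y1 x2 Hd1 H01 cx2.
have P1 := @avg_payvec R A2 A1 (fun b a => U2 a b) y2 x1 Hd2 H02 cx1.
have S1 := @avg_simplex R A1 x1 (fun s => (HQ1 (y1 s)).1) cx1.
have S2 := @avg_simplex R A2 x2 (fun s => (HQ2 (y2 s)).1) cx2.
have [d2 d20 Hz2] := @approx_indiff R A1 A2 U1 e e0.
have [d1 d10 Hz1] := @approx_indiff R A2 A1 (fun b a => U2 a b) e e0.
have M10 := normr_ge0 M1; have M20 := normr_ge0 M2.
have T10 : 0 < (2 * `|M1| + 1) / d2 by apply: divr_gt0 => //; lra.
have T20 : 0 < (2 * `|M2| + 1) / d1 by apply: divr_gt0 => //; lra.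
exists ((2 * `|M1| + 1) / d2 + (2 * `|M2| + 1) / d1) => t Ht.
have t0 : 0 < t by lra.
have [z2 [sz2 iz2 cz2]] : exists z', [/\ simplex z',
    (forall a a', payvec1 U1 z' a = payvec1 U1 z' a') &
    forall b, `|time_avg x2 t b - z' b| < e].
  apply: Hz2; first exact: S2.
  move=> a a'; rewrite !P2 // -mulrBr; apply: (@gap_small R t M1) => //; first lra.
  have -> : y1 t a - y1 0 a - (y1 t a' - y1 0 a') =
    (y1 t a - y1 t a') - (y1 0 a - y1 0 a') by ring.
  apply: le_trans; first exact: ler_normB.
  apply: lerD.
    exact: le_trans (HM1 t (ltW t0) a a') (ler_norm _).
  exact: le_trans (HM1 0 (lexx _) a a') (ler_norm _).
have [z1 [sz1 iz1 cz1]] : exists z', [/\ simplex z',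
    (forall b b', payvec1 (fun b a => U2 a b) z' b = payvec1 (fun b a => U2 a b) z' b') &
    forall a, `|time_avg x1 t a - z' a| < e].
  apply: Hz1; first exact: S1.
  move=> b b'; rewrite !P1 // -mulrBr; apply: (@gap_small R t M2) => //; first lra.
  have -> : y2 t b - y2 0 b - (y2 t b' - y2 0 b') =
    (y2 t b - y2 t b') - (y2 0 b - y2 0 b') by ring.
  apply: le_trans; first exact: ler_normB.
  apply: lerD.
    exact: le_trans (HM2 t (ltW t0) b b') (ler_norm _).
  exact: le_trans (HM2 0 (lexx _) b b') (ler_norm _).
exists z1, z2; split; last by split.
split => //.
  by move=> w sw; rewrite !payoff1E (indiff_sum iz2 sw sz1).
by move=> w sw; rewrite !payoff2E (indiff_sum iz1 sw sz2).
Qed.
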